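(* For every integer $k\ge 1$, the set $S_{\ge k}(h)$ has positive density in the set of all rays as $h\to\infty$: $\liminf_{h\to\infty}\frac{|S_{\ge k}(h)|}{N_h}>0$, where $N_h$ is the number of rays $\rho$ with $|\rho|\le h$.
   Context: A ray is a half-line $\rho=\mathbb{R}_{\ge 0}v\subset\mathbb{R}^2$ with $v\in\mathbb{Z}^2\setminus\{0\}$; $u_\rho$ is its primitive lattice generator. On $\mathbb{Z}^2$ use the norm $|(x,y)|=\max\{|x|,|y|\}$, and $|\rho|=|u_\rho|$. $\Sigma_h$ is the complete fan whose rays are all rays $\rho$ with $|\rho|\le h$ and whose $2$-dimensional cones are spanned by angularly consecutive such rays. For $\rho\in\Sigma_h(1)$ with neighbors $\tau,\omega$ in $\Sigma_h$ (adjacent rays in angular order), the singularity index produced by blowing down along $\rho$ is $|\det(u_\tau,u_\omega)|$, equivalently the unique integer $k$ with $u_\tau+u_\omega=k\,u_\rho$. $S_{\ge k}(h)$ is the set of rays $\rho\in\Sigma_h(1)$ for which this index is at least $k$. *)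

(* Defs.v *)
From HB Require Import structures.
From mathcomp Require Import all_boot all_order all_algebra.
Set Implicit Arguments. Unset Strict Implicit. Unset Printing Implicit Defensive.
Import Order.TTheory GRing.Theory Num.Theory.
Local Open Scope ring_scope.

Definition vec := (int * int)%type.

Definition det (u v : vec) : int := u.1 * v.2 - u.2 * v.1.

Definition irange (h : nat) : seq int :=
  [seq (i%:Z - h%:Z) | i <- iota 0 (h + h).+1].

(* all v in Z^2 with |v| = max(|v1|,|v2|) <= h *)
Definition box (h : nat) : seq vec :=
  [seq (x, y) | x <- irange h, y <- irange h].

Definition primitive (u : vec) : bool := gcdz u.1 u.2 == 1%N.

(* Rays of Sigma_h, identified with their primitive generators u_rho,
   |u_rho| <= h.  N_h = size (rays h). *)
Definition rays (h : nat) : seq vec := [seq u <- box h | primitive u].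

(* v is the ray immediately following u counterclockwise in Sigma_h:
   v lies counterclockwise of u at an angle < pi and no ray of Sigma_h
   lies strictly inside the open cone between u and v. *)
Definition ccw_next (h : nat) (u v : vec) : bool :=
  (0 < det u v) && all (fun w => ~~ ((0 < det u w) && (0 < det w v))) (rays h).

(* rho lies in S_{>=k}(h): with neighbours tau (counterclockwise) and
   omega (clockwise) of rho in Sigma_h, |det(u_tau, u_omega)| >= k. *)
Definition in_S_ge (h k : nat) (u : vec) : bool :=
  has (fun t => has (fun o =>
     [&& ccw_next h u t, ccw_next h o u & (k%:Z <= `|det t o|)]) (rays h)) (rays h).

Definition S_ge (h k : nat) : seq vec := [seq u <- rays h | in_S_ge h k u].

(* Main.v *)
Require Import Defs.
From HB Require Import structures.
From mathcomp Require Import all_boot all_order all_algebra.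
From mathcomp Require Import zify ring lra.
Import Order.TTheory GRing.Theory Num.Theory.
Local Open Scope ring_scope.

Lemma exists_min (T : eqType) (r : rel T) (s : seq T) :
  s != [::] -> {in s & &, forall a b c, r a b -> r b c -> r a c} ->
  {in s, forall a, ~~ r a a} ->
  exists2 m, m \in s & {in s, forall w, ~~ r w m}.
Proof.
elim: s => [|a s IH] //= _ Htr Hirr.
case: s IH Htr Hirr => [|b s] IH Htr Hirr.
  exists a; first by rewrite inE.
  by move=> w; rewrite inE => /eqP ->; apply: Hirr; rewrite inE.
have H1 : {in b :: s & &, forall a b c, r a b -> r b c -> r a c}.
  by move=> x y z Hx Hy Hz; apply: Htr; rewrite inE ?Hx ?Hy ?Hz orbT.
have H2 : {in b :: s, forall a, ~~ r a a}.
  by move=> x Hx; apply: Hirr; rewrite inE Hx orbT.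
have [m Hm Hmin] := IH isT H1 H2.
case Ham: (r a m).
  exists a; first by rewrite inE eqxx.
  move=> w; rewrite inE => /orP [/eqP ->|Hw]; first by apply: Hirr; rewrite inE eqxx.
  apply/negP => Hwa; move: (Hmin w Hw); rewrite (Htr w a m) //;
    by rewrite inE ?eqxx ?Hw ?Hm ?orbT.
exists m; first by rewrite inE Hm orbT.
move=> w; rewrite inE => /orP [/eqP ->|Hw]; first by rewrite Ham.
exact: Hmin.
Qed.

Lemma det3 (u a b c : vec) :
  det a b * det u c + det b c * det u a + det c a * det u b = 0.
Proof. rewrite /det; ring. Qed.

Lemma plucker (t o u t0 : vec) :
  det t o * det u t0 = - (det u t * det o t0) - det t t0 * det o u.
Proof. rewrite /det; ring. Qed.

Lemma key (u t0 t o : vec) (J : int) :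
  det u t0 = 1 -> 0 < det u t -> 0 < det o u ->
  det (J * u.1 + t0.1, J * u.2 + t0.2) t <= 0 ->
  det o (J * u.1 - t0.1, J * u.2 - t0.2) <= 0 ->
  0 <= J ->
  2 * J <= - det t o.
Proof.
move=> H1 Ha Hb H2 H3 HJ.
have E1 : det (J * u.1 + t0.1, J * u.2 + t0.2) t = J * det u t - det t t0.
  by rewrite /det /=; ring.
have E2 : det o (J * u.1 - t0.1, J * u.2 - t0.2) = J * det o u - det o t0.
  by rewrite /det /=; ring.
have P := plucker t o u t0.
rewrite H1 mulr1 in P.
rewrite P E1 in H2 *; rewrite E2 in H3.
move: Ha Hb H2 H3 HJ.
set a := det u t; set b := det o u; set x := det t t0; set x' := det o t0.
move=> Ha Hb H2 H3 HJ.
nia.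
Qed.

Lemma mem_irange (h : nat) (z : int) :
  - (h%:Z) <= z <= h%:Z -> z \in irange h.
Proof.
move=> /andP [H1 H2]; apply/mapP; exists (absz (z + h%:Z)).
  rewrite mem_iota; apply/andP; split => //; lia.
lia.
Qed.

Lemma mem_box (h : nat) (v : vec) :
  - (h%:Z) <= v.1 <= h%:Z -> - (h%:Z) <= v.2 <= h%:Z -> v \in box h.
Proof.
move=> H1 H2; case: v H1 H2 => a b /= H1 H2.
by apply/allpairsP; exists (a, b); split => //; apply: mem_irange.
Qed.

Lemma det1_rays (h : nat) (u w : vec) : det u w = 1 -> w \in box h -> w \in rays h.
Proof.
move=> Hd Hw; rewrite mem_filter Hw andbT /primitive.
have D : (gcdz w.1 w.2 %| det u w)%Z.
  have /dvdzP [a Ha] := dvdz_gcdl w.1 w.2.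
  have /dvdzP [b Hb] := dvdz_gcdr w.1 w.2.
  apply/dvdzP; exists (u.1 * b - u.2 * a); rewrite /det {1}Ha {1}Hb; ring.
move: D; rewrite Hd /gcdz dvdzE /= dvdn1 => /eqP ->. by [].
Qed.

Lemma tr_half (u a b c : vec) : 0 < det u a -> 0 < det u b -> 0 < det u c ->
  0 < det a b -> 0 < det b c -> 0 < det a c.
Proof.
move=> Ha Hb Hc H1 H2; have E := det3 u a b c.
have Ec : det c a = - det a c by rewrite /det; ring.
rewrite Ec in E; move: E Ha Hb Hc H1 H2.
set A := det u a; set B := det u b; set C := det u c.
set X := det a b; set Y := det b c; set Z := det a c.
move=> E Ha Hb Hc H1 H2; nia.
Qed.

Lemma geo (h k : nat) (u t0 : vec) : u \in rays h -> det u t0 = 1 ->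
  (k%:Z * u.1 + t0.1, k%:Z * u.2 + t0.2) \in box h ->
  (k%:Z * u.1 - t0.1, k%:Z * u.2 - t0.2) \in box h -> in_S_ge h k u.
Proof.
move=> Hu H1 Hb1 Hb2.
set tJ := (k%:Z * u.1 + t0.1, k%:Z * u.2 + t0.2) in Hb1.
set tJ' := (k%:Z * u.1 - t0.1, k%:Z * u.2 - t0.2) in Hb2.
have dJ : det u tJ = 1 by rewrite -H1 /det /=; ring.
have dJ' : det tJ' u = 1 by rewrite -H1 /det /=; ring.
have dJ'' : det u tJ' = - 1 by rewrite -H1 /det /=; ring.
have RJ := @det1_rays h _ _ dJ Hb1.
have RJ' : tJ' \in rays h.
  apply: (@det1_rays h (- u.1, - u.2)) => //; move: dJ''; rewrite /det /= => E; rewrite -[RHS]opprK -E; ring.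
set L := [seq w <- rays h | 0 < det u w].
have [t Ht Htmin] : exists2 t, t \in L & {in L, forall w, ~~ (0 < det w t)}.
  apply: (@exists_min _ (fun a b => 0 < det a b)).
  - have : tJ \in L by rewrite mem_filter dJ RJ.
    by case: (L).
  - move=> a b c; rewrite !mem_filter => /andP [Ha _] /andP [Hb _] /andP [Hc _].
    exact: (tr_half _ _ _ _ Ha Hb Hc).
  - by move=> a _; rewrite /det mulrC subrr ltxx.
set L' := [seq w <- rays h | 0 < det w u].
have [o Ho Homin] : exists2 o, o \in L' & {in L', forall w, ~~ (0 < det o w)}.
  apply: (@exists_min _ (fun a b => 0 < det b a)).
  - have : tJ' \in L' by rewrite mem_filter dJ' RJ'.
    by case: (L').
  - move=> a b c; rewrite !mem_filter => /andP [Ha _] /andP [Hb _] /andP [Hc _].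
    move=> Hba Hcb.
    have F : forall v w : vec, det v w = det (- w.1, - w.2) v by move=> v w; rewrite /det /=; ring.
    rewrite F in Ha; rewrite F in Hb; rewrite F in Hc.
    exact: (tr_half _ _ _ _ Hc Hb Ha).
  - by move=> a _; rewrite /det mulrC subrr ltxx.
move: Ht Ho; rewrite !mem_filter => /andP [Hdt Ht] /andP [Hdo Ho].
rewrite /in_S_ge; apply/hasP; exists t; first by rewrite mem_filter. apply/hasP; exists o; first by rewrite mem_filter.
apply/and3P; split.
- rewrite /ccw_next Hdt /=; apply/allP => w Hw; apply/negP => /andP [Hw1 Hw2].
  by move: (Htmin w); rewrite mem_filter Hw1 Hw Hw2 => /(_ isT).
- rewrite /ccw_next Hdo /=; apply/allP => w Hw; apply/negP => /andP [Hw1 Hw2].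
  by move: (Homin w); rewrite mem_filter Hw1 Hw Hw2 => /(_ isT).
have T1 : det tJ t <= 0.
  by rewrite leNgt; apply: Htmin; rewrite mem_filter dJ RJ.
have T2 : det o tJ' <= 0.
  by rewrite leNgt; apply: Homin; rewrite mem_filter dJ' RJ'.
have Hk0 : (0 <= k%:Z) by [].
have K := key _ _ _ _ _ H1 Hdt Hdo T1 T2 Hk0.
have N := ler_normr (det t o) (- det t o).
lia.
Qed.

Lemma bez (x y : nat) : (1 <= x)%N -> (1 <= y)%N -> coprime x y ->
  exists p q : int, [/\ x%:Z * q - y%:Z * p = 1, 0 <= p <= x%:Z & 0 <= q <= y%:Z].
Proof.
move=> Hx Hy Hc.
have [a [b Hab]] := Bezoutz x y.
have G : gcdz x y = 1 by rewrite /gcdz /=; move/eqP: Hc => ->.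
rewrite G in Hab.
set p := ((- b) %% x)%Z; set j := ((- b) %/ x)%Z.
have E := divz_eq (- b) x.
have Hp0 : 0 <= p by apply: modz_ge0; rewrite eqz_nat; lia.
have Hp1 : p < x%:Z by apply: ltz_pmod; rewrite ltz_nat.
exists p, (a - y%:Z * j); split.
- rewrite -/p -/j in E. nia.
- apply/andP; split => //; lia.
- rewrite -/p -/j in E.
  have Eq : x%:Z * (a - y%:Z * j) = 1 + y%:Z * p by nia.
  apply/andP; split; nia.
Qed.

Lemma quad_S (h k m x y : nat) : ((k.+1) * m <= h)%N ->
  (1 <= x <= m)%N -> (1 <= y <= m)%N -> coprime x y ->
  (x%:Z, y%:Z) \in S_ge h k.
Proof.
move=> Hm /andP [Hx1 Hx2] /andP [Hy1 Hy2] Hc.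
have Hu : (x%:Z, y%:Z) \in rays h.
  rewrite mem_filter; apply/andP; split.
    by rewrite /primitive /gcdz /=; apply/eqP; move/eqP: Hc => ->.
  apply: mem_box => /=; apply/andP; split; nia.
rewrite mem_filter Hu andbT.
have [p [q [E Hp Hq]]] := bez x y Hx1 Hy1 Hc.
move: Hp Hq => /andP [Hp0 Hp1] /andP [Hq0 Hq1].
apply: (geo h k (x%:Z, y%:Z) (p, q) Hu).
- by rewrite /det /=.
- apply: mem_box => /=; apply/andP; split; nia.
- apply: mem_box => /=; apply/andP; split; nia.
Qed.

Section NatPart.
Local Open Scope nat_scope.


Lemma count_sumE (T : Type) (a : pred T) (s : seq T) :
  count a s = \sum_(x <- s) (a x : nat).
Proof. by elim: s => [|z s IH]; rewrite ?big_nil ?big_cons //= IH. Qed.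

Lemma count_allpairs (S T R : Type) (f : S -> T -> R) (a : pred R) s t :
  count a [seq f x y | x <- s, y <- t] =
  \sum_(x <- s) \sum_(y <- t) (a (f x y) : nat).
Proof.
elim: s => [|z s IH]; first by rewrite big_nil.
by rewrite big_cons /= count_cat IH count_map count_sumE.
Qed.

Lemma mult_count (m d : nat) : 0 < d -> \sum_(x <- iota 1 m) (d %| x : nat) = m %/ d.
Proof.
move=> Hd; elim: m => [|m IH]; first by rewrite big_nil div0n.
have -> : iota 1 m.+1 = iota 1 m ++ [:: m.+1].
  by have := iotaD 1 m 1; rewrite addn1 add1n.
by rewrite big_cat /= IH big_seq1 divnS // addnC.
Qed.

Lemma pair_bound (m x y : nat) : 1 <= x <= m -> 1 <= y <= m ->
  1 <= coprime x y + \sum_(d <- iota 2 m.-1) ((d %| x) * (d %| y)).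
Proof.
move=> /andP [Hx1 Hx2] /andP [Hy1 Hy2].
case Hc: (coprime x y); first by [].
set g := gcdn x y.
have g0 : 0 < g by rewrite gcdn_gt0 Hx1.
have g1 : g != 1 by rewrite /g; move: Hc; rewrite /coprime => ->.
have gx : g <= x by apply: dvdn_leq => //; apply: dvdn_gcdl.
have gi : g \in iota 2 m.-1 by rewrite mem_iota; lia.
rewrite (bigD1_seq g) ?iota_uniq //= dvdn_gcdl dvdn_gcdr.
by rewrite add0n muln1 leq_addr.
Qed.

Definition cop (m : nat) := \sum_(x <- iota 1 m) \sum_(y <- iota 1 m) (coprime x y : nat).

Lemma union_bound (m : nat) :
  m * m <= cop m + \sum_(d <- iota 2 m.-1) (m %/ d) * (m %/ d).
Proof.
have E : \sum_(x <- iota 1 m) \sum_(y <- iota 1 m) 1 = m * m.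
  under eq_bigr do rewrite sum1_size size_iota.
  by rewrite big_const_seq count_predT size_iota iter_addn_0.
rewrite -E.
apply: (@leq_trans (\sum_(x <- iota 1 m) \sum_(y <- iota 1 m)
   (coprime x y + \sum_(d <- iota 2 m.-1) ((d %| x) * (d %| y))))).
  rewrite big_seq [X in _ <= X]big_seq; apply: leq_sum => x Hx.
  rewrite big_seq [X in _ <= X]big_seq; apply: leq_sum => y Hy.
  by apply: pair_bound; rewrite -(mem_iota 1 m) // ?Hx ?Hy.
apply: eq_leq.
under eq_bigr do rewrite big_split /=.
rewrite big_split /=; congr (_ + _).
under eq_bigr do rewrite exchange_big /=.
rewrite exchange_big /= big_seq [RHS]big_seq.
apply: eq_bigr => d Hd.
have d0 : 0 < d by move: Hd; rewrite mem_iota; lia.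
under eq_bigr do rewrite -big_distrr /=.
by rewrite -big_distrl /= mult_count.
Qed.

End NatPart.

Lemma term_bound (m j : nat) :
  (((m %/ j.+2) * (m %/ j.+2))%N%:R : rat) <=
    (m * m)%N%:R / j.+1%:R - (m * m)%N%:R / j.+2%:R.
Proof.
have H : ((m %/ j.+2) * j.+2 <= m)%N by apply: leq_divM.
have Hn : ((m %/ j.+2) * (m %/ j.+2) * (j.+1 * j.+2) <= m * m)%N.
  set q := (m %/ j.+2)%N in H *.
  apply: (@leq_trans ((q * j.+2) * (q * j.+2))); last exact: leq_mul.
  have -> : (q * j.+2 * (q * j.+2) = q * q * (j.+2 * j.+2))%N by ring.
  by rewrite leq_mul2l leq_mul2r ltnW ?orbT.
have -> : (m * m)%N%:R / j.+1%:R - (m * m)%N%:R / j.+2%:R =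
          (m * m)%N%:R / (j.+1 * j.+2)%N%:R :> rat.
  rewrite (natrM _ j.+1 j.+2); field.
  have := ler0n rat j; move=> ?; apply/andP; split; apply/negP => /eqP ?; lra.
rewrite ler_pdivlMr ?ltr0n ?muln_gt0 // -natrM ler_nat.
exact: Hn.
Qed.

Lemma sq_bound (m n : nat) :
  ((\sum_(d <- iota 2 n.+1) (m %/ d) * (m %/ d))%N%:R : rat) <=
    3/4 * (m * m)%N%:R - (m * m)%N%:R / n.+2%:R.
Proof.
elim: n => [|n IH].
  rewrite /= big_seq1.
  have H : ((m %/ 2) * 2 <= m)%N by apply: leq_divM.
  have Hn : (4 * ((m %/ 2) * (m %/ 2)) <= m * m)%N by nia.
  rewrite -(ler_nat rat) natrM in Hn.
  move: Hn; set A := ((m %/ 2) * (m %/ 2))%N%:R; set M := (m * m)%N%:R.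
  move=> Hn. rewrite (_ : M / 2%:R = M / 2) //. lra.
have -> : iota 2 n.+2 = iota 2 n.+1 ++ [:: n.+3].
  by have := iotaD 2 n.+1 1; rewrite addn1 => ->.
rewrite big_cat big_seq1 /= natrD.
have T := term_bound m n.+1.
move: IH T; set A := (\sum_(_ <- _) _)%N%:R; set M := (m * m)%N%:R.
set q := ((m %/ n.+3) * (m %/ n.+3))%N%:R.
set x := M / n.+2%:R; set y := M / n.+3%:R.
lra.
Qed.

Definition Qs (m : nat) : seq vec :=
  [seq p <- [seq (x%:Z, y%:Z) | x <- iota 1 m, y <- iota 1 m] | primitive p].

Lemma size_Qs m : size (Qs m) = cop m.
Proof.
rewrite size_filter count_allpairs /cop.
apply: eq_bigr => x _; apply: eq_bigr => y _.
by rewrite /primitive /gcdz /= eqz_nat.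
Qed.

Lemma uniq_Qs m : uniq (Qs m).
Proof.
apply: filter_uniq; apply: allpairs_uniq; rewrite ?iota_uniq //.
by move=> [a b] [c d] _ _ /= [-> ->].
Qed.

Lemma Qs_sub h k m : ((k.+1) * m <= h)%N -> {subset Qs m <= S_ge h k}.
Proof.
move=> Hm p; rewrite mem_filter => /andP [Hp Hin].
case/allpairsP: Hin => [[x y] [Hx Hy E]]; subst p.
move: Hx Hy Hp; rewrite !mem_iota /= /primitive /gcdz /= eqz_nat => Hx Hy Hc.
apply: (quad_S h k m x y Hm) => //; lia.
Qed.

Lemma cop_bound m : (m * m <= 4 * cop m)%N.
Proof.
have U := union_bound m.
case: m U => [|[|n]] U; first by [].
  by move: U; rewrite /= big_nil; lia.
have S := sq_bound n.+2 n.
have H4 : (4 * (\sum_(d <- iota 2 n.+1) (n.+2 %/ d) * (n.+2 %/ d)) <= 3 * (n.+2 * n.+2))%N.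
  rewrite -(ler_nat rat) (natrM _ 4) (natrM _ 3).
  move: S; set T := (\sum_(_ <- _) _)%N%:R; set M := (n.+2 * n.+2)%N%:R.
  have : 0 <= M / n.+2%:R by apply: divr_ge0; apply: ler0n.
  move=> Hx HS; rewrite -[4%:R]/(4 : rat) -[3%:R]/(3 : rat); move: Hx HS; set x := M / _ => Hx HS; lra.
move: U H4 => /=; lia.
Qed.

Lemma size_rays h : (size (rays h) <= (h + h).+1 * (h + h).+1)%N.
Proof.
rewrite size_filter; apply: (leq_trans (count_size _ _)).
by rewrite size_allpairs !size_map size_iota.
Qed.

Theorem corollary4p1 (k : nat) (hk : (1 <= k)%N) :
  exists c : rat, 0 < c /\
    exists H : nat, forall h : nat, (H <= h)%N ->
      c * (size (rays h))%:R <= (size (S_ge h k))%:R.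
Proof.
set z : rat := (144 * (k.+1 * k.+1))%N%:R.
have z0 : 0 < z by rewrite ltr0n.
exists z^-1; split; first by rewrite invr_gt0.
exists (k + k).+1 => h Hh.
set m := (h %/ k.+1)%N.
have E := divn_eq h k.+1.
have Hr : (h %% k.+1 < k.+1)%N by apply: ltn_pmod.
have Hm : (k.+1 * m <= h)%N by rewrite mulnC; apply: leq_divM.
have A : ((h + h).+1 <= 6 * (k.+1 * m))%N by rewrite -/m in E; lia.
have AA := leq_mul A A.
have C := cop_bound m.
have Q : (cop m <= size (S_ge h k))%N.
  by rewrite -size_Qs; apply: uniq_leq_size; [apply: uniq_Qs | apply: Qs_sub].
have N := size_rays h.
have F : (size (rays h) <= 144 * (k.+1 * k.+1) * size (S_ge h k))%N.
  apply: (leq_trans N); apply: (leq_trans AA).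
  have -> : (6 * (k.+1 * m) * (6 * (k.+1 * m)) = 36 * (k.+1 * k.+1) * (m * m))%N by ring.
  have -> : (144 * (k.+1 * k.+1) * size (S_ge h k) = 36 * (k.+1 * k.+1) * (4 * size (S_ge h k)))%N by ring.
  rewrite leq_mul2l; apply/orP; right.
  apply: (leq_trans C); rewrite leq_mul2l; apply/orP; right; exact: Q.
rewrite ler_pdivrMl // -natrM ler_nat; exact: F.
Qed.
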